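(* Let $C>0$ and $a,b\in\mathbb{R}$, and let $w(x)=Ce^{ax+b}$. For $\sigma>0$ and $x,y\in\mathbb{R}$ define the one-step transition density $$p_1(x\mid y,\sigma,C,a,b)=\frac{k_\sigma(x;y)\,w(x)}{\int_{\mathbb{R}}k_\sigma(z;y)\,w(z)\,\mathrm{d}z},$$ where $k_\sigma(\cdot;y)$ is the Gaussian density with mean $y$ and standard deviation $\sigma$, and for $n\in\mathbb{N}$ define the $n$-step density $$p_n(x_n\mid x_0,\sigma,C,a,b)=\int_{\mathbb{R}^{n-1}}\prod_{k=1}^{n}p_1(x_k\mid x_{k-1},\sigma,C,a,b)\,\mathrm{d}x_1\cdots\mathrm{d}x_{n-1}.$$ Then the model is robust of degree $n$ for every $n\in\mathbb{N}$ with parameter transformation $g_n(\sigma,C,a,b)=(\sqrt{n}\,\sigma,C,a,b)$; that is, for all $n\in\mathbb{N}$, $\sigma>0$ and $x,y\in\mathbb{R}$, $$p_n(x\mid y,\sigma,C,a,b)=p_1(x\mid y,\sqrt{n}\,\sigma,C,a,b).$$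
   Context: This concerns a one-dimensional discrete-time Markov movement model (locations $X_t\in\mathbb{R}$ at times $0,\tau,2\tau,\dots$) whose one-step transition density is a Gaussian movement kernel multiplied by a positive spatial weighting function $w$ and renormalized, as written in the claim. A model is called robust of degree $n$ if there is an injective map $g_n$ on the parameter space with $p_n(x\mid y,\bm\theta)=p_1(x\mid y,g_n(\bm\theta))$ for all $x,y$. *)

(* Defs.v *)
From HB Require Import structures.
From mathcomp Require Import all_boot all_order all_algebra.
From mathcomp Require Import all_classical all_reals all_analysis.
Set Implicit Arguments. Unset Strict Implicit. Unset Printing Implicit Defensive.
Import Order.TTheory GRing.Theory Num.Theory.
Import numFieldNormedType.Exports.
Local Open Scope classical_set_scope.
Local Open Scope ring_scope.

Section Model.
Context {R : realType}.

Definition kern (sigma y x : R) : R := normal_pdf y sigma x.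

Definition wfun (C a b x : R) : R := C * expR (a * x + b).

Definition p1 (sigma C a b : R) (x y : R) : R :=
  kern sigma y x * wfun C a b x /
  (\int[@lebesgue_measure R]_(z in [set: R]) (kern sigma y z * wfun C a b z)).

(* pn_aux m x x0 = p_{m+1}(x | x0): the integral over R^m of the product
   prod_{k=1}^{m+1} p_1(x_k | x_{k-1}) written as an iterated integral
   (integrating out the intermediate locations one at a time). *)
Fixpoint pn_aux (m : nat) (sigma C a b : R) (x x0 : R) : R :=
  match m with
  | 0 => p1 sigma C a b x x0
  | m'.+1 => \int[@lebesgue_measure R]_(z in [set: R])
               (pn_aux m' sigma C a b z x0 * p1 sigma C a b x z)
  end.

Definition pn (n : nat) (sigma C a b : R) (x x0 : R) : R :=
  pn_aux n.-1 sigma C a b x x0.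

End Model.

(* Main.v *)
Require Import Defs.
From HB Require Import structures.
From mathcomp Require Import all_boot all_order all_algebra.
From mathcomp Require Import all_classical all_reals all_analysis.
From mathcomp Require Import ring lra.
Import Order.TTheory GRing.Theory Num.Theory.
Local Open Scope ring_scope.

Section H.
Context {R : realType}.

Lemma Rint_npdf (m s : R) :
  \int[@lebesgue_measure R]_(z in [set: R]) normal_pdf m s z = 1.
Proof. by rewrite /Rintegral integral_normal_pdf. Qed.

Lemma RintZ_npdf (K m s : R) :
  \int[@lebesgue_measure R]_(z in [set: R]) (K * normal_pdf m s z) = K.
Proof.
rewrite RintegralZl //; last exact: integrable_normal_pdf.
by rewrite Rint_npdf mulr1.
Qed.

Lemma npdf_sq (m s t x : R) : s != 0 -> t != 0 -> s ^+ 2 = t ^+ 2 ->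
  normal_pdf m s x = normal_pdf m t x.
Proof.
move=> s0 t0 st; rewrite /normal_pdf (negbTE s0) (negbTE t0).
by rewrite /normal_peak /normal_fun st.
Qed.

Lemma npdf_shift (m s c x : R) : s != 0 ->
  normal_pdf m s (x - c) = normal_pdf (m + c) s x.
Proof.
move=> s0; rewrite /normal_pdf (negbTE s0) /normal_fun.
by have -> : x - c - m = x - (m + c) by rewrite opprD addrA addrAC.
Qed.

Lemma npdf_sym (m s x : R) : s != 0 ->
  normal_pdf m s x = normal_pdf x s m.
Proof.
move=> s0; rewrite /normal_pdf (negbTE s0) /normal_fun.
by rewrite -sqrrN opprB.
Qed.
Lemma expo (a y s z : R) : s != 0 ->
  - (z - y) ^+ 2 / (s ^+ 2 *+ 2) + (a * z) =
   a * y + a ^+ 2 * s ^+ 2 / 2 + - (z - (y + a * s ^+ 2)) ^+ 2 / (s ^+ 2 *+ 2).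
Proof.
move=> s0; rewrite !mulr2n. field.
by rewrite -mulr2n mulrn_eq0 sqrf_eq0 s0.
Qed.
Lemma kw (C a b s y z : R) : s != 0 ->
  kern s y z * wfun C a b z =
  (C * expR (a * y + a ^+ 2 * s ^+ 2 / 2 + b)) * normal_pdf (y + a * s ^+ 2) s z.
Proof.
move=> s0; rewrite /kern /wfun /normal_pdf (negbTE s0) /normal_fun.
have E : expR (- (z - y) ^+ 2 / (s ^+ 2 *+ 2)) * expR (a * z + b) =
   expR (a * y + a ^+ 2 * s ^+ 2 / 2 + b) * expR (- (z - (y + a * s ^+ 2)) ^+ 2 / (s ^+ 2 *+ 2)).
  rewrite -!expRD; congr expR.
  by rewrite addrA expo // addrAC.
move: E; generalize (expR (- (z - y) ^+ 2 / (s ^+ 2 *+ 2))) (expR (a * z + b))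
  (expR (a * y + a ^+ 2 * s ^+ 2 / 2 + b)) (expR (- (z - (y + a * s ^+ 2)) ^+ 2 / (s ^+ 2 *+ 2)))
  (normal_peak s) => A1 A2 A3 A4 P E.
have -> : P * A1 * (C * A2) = P * C * (A1 * A2) by ring.
rewrite E; ring.
Qed.
Lemma p1E (C a b s x y : R) : 0 < C -> s != 0 ->
  p1 s C a b x y = normal_pdf (y + a * s ^+ 2) s x.
Proof.
move=> C0 s0; rewrite /p1.
under eq_Rintegral do rewrite kw //.
rewrite RintZ_npdf kw // mulrAC divff ?mul1r //.
by rewrite gt_eqF // mulr_gt0 // expR_gt0.
Qed.
Lemma npdf_mul (m1 m2 s1 s2 z : R) : 0 < s1 -> 0 < s2 ->
  normal_pdf m1 s1 z * normal_pdf m2 s2 z =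
  normal_pdf m1 (Num.sqrt (s1 ^+ 2 + s2 ^+ 2)) m2 *
  normal_pdf ((m1 * s2 ^+ 2 + m2 * s1 ^+ 2) / (s1 ^+ 2 + s2 ^+ 2))
             (s1 * s2 / Num.sqrt (s1 ^+ 2 + s2 ^+ 2)) z.
Proof.
move=> h1 h2.
have hT : 0 < s1 ^+ 2 + s2 ^+ 2 by rewrite addr_gt0 // exprn_gt0.
set T := s1 ^+ 2 + s2 ^+ 2 in hT *.
have hS : 0 < Num.sqrt T by rewrite sqrtr_gt0.
set S := Num.sqrt T in hS *.
have hS2 : S ^+ 2 = T by rewrite sqr_sqrtr // ltW.
have hu : 0 < s1 * s2 / S by rewrite divr_gt0 // mulr_gt0.
have hu2 : (s1 * s2 / S) ^+ 2 = s1 ^+ 2 * s2 ^+ 2 / T by rewrite expr_div_n exprMn hS2.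
have s10 : s1 != 0 by rewrite gt_eqF.
have s20 : s2 != 0 by rewrite gt_eqF.
have T0 : T != 0 by rewrite gt_eqF.
rewrite /normal_pdf (negbTE s10) (negbTE s20) (gt_eqF hS) (gt_eqF hu).
rewrite /normal_fun /normal_peak hS2 hu2.
have Hp : (Num.sqrt (s1 ^+ 2 * pi *+ 2))^-1 * (Num.sqrt (s2 ^+ 2 * pi *+ 2))^-1 =
   (Num.sqrt (T * pi *+ 2))^-1 * (Num.sqrt (s1 ^+ 2 * s2 ^+ 2 / T * pi *+ 2))^-1.
  rewrite -!invfM -!sqrtrM; first (congr (Num.sqrt _)^-1; rewrite /T !mulr2n; field; exact: T0).
  1,2: by rewrite mulrn_wge0 // mulr_ge0 // ?pi_ge0 ?sqr_ge0 // ltW.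
have He : expR (- (z - m1) ^+ 2 / (s1 ^+ 2 *+ 2)) * expR (- (z - m2) ^+ 2 / (s2 ^+ 2 *+ 2)) =
  expR (- (m2 - m1) ^+ 2 / (T *+ 2)) *
  expR (- (z - (m1 * s2 ^+ 2 + m2 * s1 ^+ 2) / T) ^+ 2 / (s1 ^+ 2 * s2 ^+ 2 / T *+ 2)).
  rewrite -!expRD; congr expR; rewrite /T !mulr2n; field.
  by rewrite !gt_eqF // ?addr_gt0 // ?exprn_gt0 // ?mulr_gt0.
move: Hp He; generalize (Num.sqrt (s1 ^+ 2 * pi *+ 2))^-1 (Num.sqrt (s2 ^+ 2 * pi *+ 2))^-1
  (Num.sqrt (T * pi *+ 2))^-1 (Num.sqrt (s1 ^+ 2 * s2 ^+ 2 / T * pi *+ 2))^-1 => P1 P2 P3 P4 Hp.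
generalize (expR (- (z - m1) ^+ 2 / (s1 ^+ 2 *+ 2))) (expR (- (z - m2) ^+ 2 / (s2 ^+ 2 *+ 2)))
  (expR (- (m2 - m1) ^+ 2 / (T *+ 2)))
  (expR (- (z - (m1 * s2 ^+ 2 + m2 * s1 ^+ 2) / T) ^+ 2 / (s1 ^+ 2 * s2 ^+ 2 / T *+ 2)))
  => A1 A2 A3 A4 He.
have -> : P1 * A1 * (P2 * A2) = (P1 * P2) * (A1 * A2) by ring.
rewrite Hp He; ring.
Qed.
Lemma npdf_flip (z c s x : R) : s != 0 ->
  normal_pdf (z + c) s x = normal_pdf (x - c) s z.
Proof. by move=> s0; rewrite -(npdf_shift z s c x) // npdf_sym. Qed.

Lemma pn_auxE (C a b s : R) : 0 < C -> 0 < s -> forall m x x0,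
  pn_aux m s C a b x x0 =
  normal_pdf (x0 + (m.+1)%:R * a * s ^+ 2) (Num.sqrt (m.+1)%:R * s) x.
Proof.
move=> C0 s0; have s0' : s != 0 by rewrite gt_eqF.
elim=> [|m IH] x x0 /=.
  rewrite p1E // sqrtr1. rewrite mul1r. rewrite mul1r. by [].
have hs1 : 0 < Num.sqrt (m.+1)%:R * s by rewrite mulr_gt0 // sqrtr_gt0 ltr0n.
under eq_Rintegral => z _ do rewrite IH (p1E C a b s x z C0 s0') (npdf_flip z _ s x s0') (npdf_mul _ _ _ _ z hs1 s0).
rewrite RintZ_npdf.
have hS : 0 < Num.sqrt ((Num.sqrt (m.+1)%:R * s) ^+ 2 + s ^+ 2).
  by rewrite sqrtr_gt0 addr_gt0 // exprn_gt0.
have hS' : 0 < Num.sqrt (m.+2)%:R * s by rewrite mulr_gt0 // sqrtr_gt0 ltr0n.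
rewrite (npdf_shift _ _ _ x (lt0r_neq0 hS)).
rewrite (npdf_sq _ _ _ x (lt0r_neq0 hS) (lt0r_neq0 hS')); last first.
  rewrite sqr_sqrtr ?addr_ge0 ?sqr_ge0 // !exprMn !sqr_sqrtr ?ler0n //.
  
  by rewrite -[(m.+2)%N]addn1 natrD mulrDl [X in _ = _ + X]mul1r.

rewrite -[(m.+2)%N]addn1 natrD !mulrDl. by rewrite addrA [X in _ = normal_pdf (_ + X * _) _ _]mul1r.
Qed.
End H.

Theorem theorem2 (R : realType) (C a b : R) (hC : 0 < C) :
  forall (n : nat), (0 < n)%N ->
  forall (sigma : R), 0 < sigma ->
  forall x y : R,
    pn n sigma C a b x y = p1 (Num.sqrt (n%:R) * sigma) C a b x y.
Proof.
case=> [//|n] _ s s0 x y.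
have hs : 0 < Num.sqrt (n.+1)%:R * s by rewrite mulr_gt0 // sqrtr_gt0 ltr0n.
rewrite /pn /= (pn_auxE C a b s hC s0) (p1E C a b _ x y hC (lt0r_neq0 hs)).
by rewrite exprMn sqr_sqrtr ?ler0n // (mulrA a (n.+1)%:R (s ^+ 2)) (mulrC a (n.+1)%:R).
Qed.
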